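(* Let $K$ be a field of characteristic $0$, let $E$ be the infinite-dimensional unitary Grassmann algebra over $K$ with even part $E_0$, let $A=\begin{pmatrix} E_0 & E\\ 0 & E\end{pmatrix}$, and let $F_n(A)=K\langle x_1,\dots,x_n\rangle/(K\langle x_1,\dots,x_n\rangle\cap T(A))$. Let $n\geq 2$ be even and $m\geq n+2$. Then the polynomial \[f_{m,n}^{(2)}=[x_2,x_1,\dots,x_1][x_1,x_2][x_3,x_4]\cdots[x_{n-1},x_n],\] where the first factor is the left-normed commutator of length $m-n$ consisting of $x_2$ followed by $m-n-1$ copies of $x_1$, is not a polynomial identity of $F_n(A)$.
   Context: All algebras are associative and unitary over $K$; $T(A)$ is the ideal of polynomial identities of $A$. $E$ is generated by anticommuting $e_1,e_2,\dots$ and $E_0$ is the span of basis products of even length. Commutators: $[a,b]=ab-ba$, $[a_1,\dots,a_k]=[[a_1,\dots,a_{k-1}],a_k]$. The polynomial has total degree $m$. *)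

(* Defs.v *)
From HB Require Import structures.
From mathcomp Require Import all_boot all_order all_algebra.
Set Implicit Arguments. Unset Strict Implicit. Unset Printing Implicit Defensive.
Import Order.TTheory GRing.Theory Num.Theory.
Local Open Scope ring_scope.

Section Defs.
Variable K : fieldType.

(** Two terms denote the same polynomial iff they agree under every
    evaluation in every associative unitary K-algebra; we only ever use
    terms through evaluation in A, which is all T(A) depends on. *)
Inductive term : Type :=
  | Var of nat
  | Cst of K
  | Add of term & term
  | Mul of term & term.

Fixpoint vars_in (n : nat) (t : term) : bool :=
  match t with
  | Var i => (1 <= i <= n)%N
  | Cst _ => true
  | Add a b => vars_in n a && vars_in n b
  | Mul a b => vars_in n a && vars_in n b
  end.

Fixpoint subst (s : nat -> term) (t : term) : term :=
  match t with
  | Var i => s i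
  | Cst c => Cst c
  | Add a b => Add (subst s a) (subst s b)
  | Mul a b => Mul (subst s a) (subst s b)
  end.

Definition comm (a b : term) : term := Add (Mul a b) (Mul (Cst (-1)) (Mul b a)).

(** An element is a formal linear combination of words in the generators:
    [(c, [:: i1; ...; ik])] stands for c * e_{i1} ... e_{ik}.
    Its coefficient on the basis monomial e_S (S strictly increasing) is
    obtained by normalizing each word with the relations e_i e_j = - e_j e_i,
    e_i^2 = 0: a word with a repeated letter is 0, otherwise it equals
    (-1)^(number of inversions) times its sorted version. *)
Definition grass := seq (K * seq nat).

Fixpoint inversions (w : seq nat) : nat :=
  match w with
  | [::] => 0%N
  | x :: s => (count (fun y => y < x)%N s + inversions s)%N
  end.

Definition gcoef (x : grass) (S : seq nat) : K :=
  \sum_(p <- x | uniq p.2 && (sort leq p.2 == S)) (-1) ^+ inversions p.2 * p.1.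

Definition gzero (x : grass) : Prop := forall S, gcoef x S = 0.

Definition geven (x : grass) : Prop := forall S, odd (size S) -> gcoef x S = 0.

Definition gadd (x y : grass) : grass := x ++ y.
Definition gmul (x y : grass) : grass :=
  [seq (p.1 * q.1, p.2 ++ q.2) | p <- x, q <- y].
Definition gscal (c : K) : grass := [:: (c, [::])].

(** * A = [[E_0, E], [0, E]]; an element (a, b, c) is the matrix
    [[a, b], [0, c]], with a in E_0. *)
Definition Aelt := (grass * grass * grass)%type.

Definition Avalid (u : Aelt) : Prop := geven u.1.1.
Definition Azero (u : Aelt) : Prop := [/\ gzero u.1.1, gzero u.1.2 & gzero u.2].

Definition Aadd (u v : Aelt) : Aelt :=
  (gadd u.1.1 v.1.1, gadd u.1.2 v.1.2, gadd u.2 v.2).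
Definition Amul (u v : Aelt) : Aelt :=
  (gmul u.1.1 v.1.1, gadd (gmul u.1.1 v.1.2) (gmul u.1.2 v.2), gmul u.2 v.2).
Definition Ascal (c : K) : Aelt := (gscal c, [::], gscal c).

Fixpoint evalA (env : nat -> Aelt) (t : term) : Aelt :=
  match t with
  | Var i => env i
  | Cst c => Ascal c
  | Add a b => Aadd (evalA env a) (evalA env b)
  | Mul a b => Amul (evalA env a) (evalA env b)
  end.

Definition in_TA (f : term) : Prop :=
  forall env : nat -> Aelt, (forall i, Avalid (env i)) -> Azero (evalA env f).

(** f is a polynomial identity of the relatively free algebra
    F_n(A) = K<x_1..x_n> / (K<x_1..x_n> ∩ T(A)):  for every choice of
    elements g_i + T(A) of F_n(A) (g_i in K<x_1..x_n>), f(g_1, g_2, ...)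
    is zero in F_n(A), i.e. lies in T(A). *)
Definition PI_Fn (n : nat) (f : term) : Prop :=
  forall s : nat -> term, (forall i, vars_in n (s i)) -> in_TA (subst s f).

Definition lead_comm (m n : nat) : term :=
  iter (m - n - 1) (fun t => comm t (Var 1)) (Var 2).

Definition f2 (m n : nat) : term :=
  foldl (fun acc k => Mul acc (comm (Var k.*2.-1) (Var k.*2)))
        (lead_comm m n) (iota 1 n./2).

End Defs.

(* Main.v *)
Require Import Defs.
From mathcomp Require Import all_boot all_order all_algebra.
Set Implicit Arguments. Unset Strict Implicit. Unset Printing Implicit Defensive.
Import Order.TTheory GRing.Theory Num.Theory.

Lemma eqseq_catr (T : eqType) (s1 s2 s3 s4 : seq T) :
  size s3 = size s4 -> (s1 ++ s3 == s2 ++ s4) = (s1 == s2) && (s3 == s4).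
Proof.
move=> h; case: (eqVneq (size s1) (size s2)) => hs; first exact: eqseq_cat.
apply/idP/idP.
  by move/eqP/(congr1 size); rewrite !size_cat h => /addIn /eqP; rewrite (negbTE hs).
by case/andP => /eqP e _; rewrite e eqxx in hs.
Qed.

Lemma inv_cat (L : nat) (u v : seq nat) :
  all (fun i => i < L) u -> all (fun i => L <= i) v ->
  inversions (u ++ v) = inversions u + inversions v.
Proof.
elim: u => [|a u IH] //= /andP [ha hu] hv.
rewrite IH // count_cat addnA; congr (_ + _ + _).
rewrite -[RHS]addn0; congr (_ + _).
apply/eqP; rewrite eqn0Ngt -has_count; apply/hasPn => i /(allP hv) hi.
by rewrite -leqNgt (leq_trans (ltnW ha) hi).
Qed.

Lemma sort_cat2 (L : nat) (u v : seq nat) :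
  all (fun i => i < L) u -> all (fun i => L <= i) v ->
  sort leq (u ++ v) = sort leq u ++ sort leq v.
Proof.
move=> hu hv.
have -> : sort leq (u ++ v) = sort leq (sort leq u ++ sort leq v).
  apply/perm_sortP; [exact: leq_total|exact: leq_trans|exact: anti_leq|].
  by apply: perm_cat; rewrite perm_sym perm_sort.
apply: sorted_sort; first exact: leq_trans.
rewrite (sorted_pairwise leq_trans) pairwise_cat.
rewrite -!(sorted_pairwise leq_trans) !sort_sorted ?andbT //; try exact: leq_total.
apply/allrelP => i j; rewrite !mem_sort => /(allP hu) hi /(allP hv) hj.
exact: leq_trans (ltnW hi) hj.
Qed.

Lemma uniq_cat2 (L : nat) (u v : seq nat) :
  all (fun i => i < L) u -> all (fun i => L <= i) v ->
  uniq (u ++ v) = uniq u && uniq v.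
Proof.
move=> hu hv; rewrite cat_uniq; congr (_ && _).
have -> : has (mem u) v = false.
  apply/negbTE/hasPn => i /(allP hv) hi; apply/negP => /(allP hu) /=.
  by rewrite ltnNge hi.
done.
Qed.
Local Open Scope ring_scope.

Section Aux.
Variable K : fieldType.
Implicit Types x y : grass K.

Lemma gcoef_cat x y S : gcoef (x ++ y) S = gcoef x S + gcoef y S.
Proof. by rewrite /gcoef big_cat. Qed.

Lemma gcoef_nil S : gcoef ([::] : grass K) S = 0.
Proof. by rewrite /gcoef big_nil. Qed.

Lemma gcoef_scal c x S : gcoef (gmul (gscal c) x) S = c * gcoef x S.
Proof.
rewrite /gcoef /gmul /gscal /= cats0 big_map mulr_sumr.
by apply: eq_bigr => q _ /=; rewrite mulrCA.
Qed.

Definition wordsP (P : pred (seq nat)) x := all (fun p => P p.2) x.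

Lemma wordsP_cat P x y : wordsP P x -> wordsP P y -> wordsP P (x ++ y).
Proof. by rewrite /wordsP all_cat => -> ->. Qed.

Lemma wordsP_mul (P Q R : pred (seq nat)) x y :
  (forall u v, P u -> Q v -> R (u ++ v)) ->
  wordsP P x -> wordsP Q y -> wordsP R (gmul x y).
Proof.
move=> H /allP hx /allP hy; apply/allP => r /allpairsP [[p q] [/= hp hq ->]] /=.
by apply: H; [apply: hx | apply: hy].
Qed.

Lemma gcoef_mul x y S :
  gcoef (gmul x y) S =
  \sum_(p <- x) \sum_(q <- y)
     (if uniq (p.2 ++ q.2) && (sort leq (p.2 ++ q.2) == S)
      then (-1) ^+ inversions (p.2 ++ q.2) * (p.1 * q.1) else 0).
Proof.
by rewrite /gcoef /gmul big_mkcond big_allpairs_dep.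
Qed.

Lemma gcoef_expand x S :
  gcoef x S = \sum_(p <- x)
     (if uniq p.2 && (sort leq p.2 == S) then (-1) ^+ inversions p.2 * p.1 else 0).
Proof. by rewrite /gcoef big_mkcond. Qed.

Lemma gcoef_mulB x y S :
  wordsP (all (fun i => i == 1%N)) x -> wordsP (fun w => 1%N \in w) y ->
  gcoef (gmul x y) S = gcoef x [::] * gcoef y S.
Proof.
move=> /allP hx /allP hy.
rewrite gcoef_mul (gcoef_expand x) (gcoef_expand y) mulr_suml.
apply: eq_big_seq => p /hx /= hp; rewrite mulr_sumr; apply: eq_big_seq => q /hy /= hq.
case: p hp => c w /=; case: w => [|a w] hw.
  rewrite /= expr0 !mul1r; case: ifP => _; rewrite ?mulr0 // mulrCA //.
move: hw => /= /andP [/eqP -> _].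
have -> : (sort leq (1%N :: w) == [::]) = false.
  by apply/negbTE; rewrite -size_eq0 size_sort.
rewrite andbF mul0r.
by rewrite /= mem_cat hq orbT.
Qed.

Lemma gcoef_mulA x y (L : nat) S1 S2 :
  wordsP (all (fun i => (i < L)%N)) x ->
  wordsP (fun w => all (fun i => (L <= i)%N) w && (size w == size S2)) y ->
  gcoef (gmul x y) (S1 ++ S2) = gcoef x S1 * gcoef y S2.
Proof.
move=> /allP hx /allP hy.
rewrite gcoef_mul (gcoef_expand x) (gcoef_expand y) mulr_suml.
apply: eq_big_seq => p /hx /= hp; rewrite mulr_sumr; apply: eq_big_seq => q /hy /= /andP [hq hs].
rewrite (uniq_cat2 hp hq) (sort_cat2 hp hq) (inv_cat hp hq) eqseq_catr; last first.
  by rewrite size_sort (eqP hs).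
case: (uniq p.2) ; case: (uniq q.2); case: (sort leq p.2 == S1); case: (sort leq q.2 == S2); rewrite /= ?mulr0 ?mul0r //.
by rewrite exprD mulrACA.
Qed.
End Aux.
Section Conc.
Variable K : fieldType.
Local Open Scope ring_scope.
Definition cg (i : nat) : grass K := [:: (1, [:: i])].
Definition X (i : nat) : Aelt K :=
  if i == 1%N then (gscal 1, [::], cg 1) else if i == 2%N then ([::], gscal 1, cg 2)
  else ([::], [::], cg i).

Lemma gmul0l (y : grass K) : gmul [::] y = [::]. Proof. by []. Qed.
Lemma gmul0r (x : grass K) : gmul x [::] = [::].
Proof. by elim: x. Qed.

Lemma gcoef_cg0 (x : grass K) i : gcoef (gmul x (cg i)) [::] = 0.
Proof.
rewrite gcoef_mul big1 // => p _; rewrite big_cons big_nil addr0.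
have -> : (sort leq (p.2 ++ [:: i]) == [::]) = false.
  by apply/negbTE; rewrite -size_eq0 size_sort size_cat addn1.
by rewrite andbF.
Qed.

Lemma wP1 (P : pred nat) (u v : seq nat) : all P u -> all P v -> all P (u ++ v).
Proof. by rewrite all_cat => -> ->. Qed.

Lemma lead_ok k :
  let T := evalA X (iter k (fun t => comm t (Var K 1)) (Var K 2)) in
  [/\ T.1.1 = [::], wordsP (all (fun i => i == 1%N)) T.1.2 & gcoef T.1.2 [::] = (-1) ^+ k].
Proof.
elim: k => [|k [IH1 IH2 IH3]] /=.
  by split => //; rewrite /gcoef /= big_cons big_nil /= mulr1 addr0.
set T := evalA X _ in IH1 IH2 IH3 *.
rewrite IH1 /gadd !gmul0l !gmul0r !cats0 /=.
split => //.
  apply: wordsP_cat; first by apply: (wordsP_mul (@wP1 _)) => //.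
  apply: (wordsP_mul (@wP1 _)) => //; apply: (wordsP_mul (@wP1 _)) => //.
by rewrite gcoef_cat gcoef_cg0 add0r !gcoef_scal IH3 mul1r exprS mulN1r.
Qed.

Lemma X2 i : (X i).2 = cg i.
Proof. by rewrite /X; case: eqP => [->|_] //; case: eqP => [->|_]. Qed.

Definition Dg (a b : nat) : grass K := (evalA X (comm (Var K a) (Var K b))).2.

Lemma DgE a b : Dg a b = [:: (1 * 1, [:: a; b]); (-1 * (1 * 1), [:: b; a])].
Proof. by rewrite /Dg /= !X2. Qed.

Lemma Dg_words a b L : (L <= a)%N -> (L <= b)%N ->
  wordsP (fun w => all (fun i => (L <= i)%N) w && (size w == size [:: a; b])) (Dg a b).
Proof. by move=> ha hb; rewrite DgE /wordsP /= ha hb. Qed.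

Lemma Dg_coef a b : (a < b)%N -> gcoef (Dg a b) [:: a; b] = 2%:R.
Proof.
move=> hab; rewrite DgE /gcoef !big_cons big_nil /=.
have nab : a != b by rewrite neq_ltn hab.
have nba : b != a by rewrite eq_sym.
rewrite !inE nab nba /=.
have s1 : sort leq [:: a; b] = [:: a; b] by apply: sorted_sort => //=; [exact: leq_trans | rewrite ltnW].
have s2 : sort leq [:: b; a] = [:: a; b].
  rewrite -s1; apply/perm_sortP; [exact: leq_total|exact: leq_trans|exact: anti_leq|].
  by rewrite perm_sym; apply/permP => P /=; rewrite !addn0 addnC.
have hba : (b < a)%N = false by rewrite ltnNge ltnW.
rewrite s1 s2 eqxx hba hab /= !addr0.
by rewrite !addn0 expr0 expr1 !mulr1 mulN1r opprK.
Qed.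
Lemma evalA_Mul env (a b : term K) : evalA env (Mul a b) = Amul (evalA env a) (evalA env b).
Proof. by []. Qed.
Lemma Amul11 (u v : Aelt K) : (Amul u v).1.1 = gmul u.1.1 v.1.1. Proof. by []. Qed.
Lemma Amul12 (u v : Aelt K) : (Amul u v).1.2 = gadd (gmul u.1.1 v.1.2) (gmul u.1.2 v.2).
Proof. by []. Qed.

Definition step (acc : term K) (k : nat) := Mul acc (comm (Var K k.*2.-1) (Var K k.*2)).
Definition lead k := iter k (fun t => comm t (Var K 1)) (Var K 2).

Lemma fold_ok k j :
  let T := evalA X (foldl step (lead k) (iota 1 j.+1)) in
  [/\ T.1.1 = [::], wordsP (all (fun i => (i < j.+1.*2.+1)%N)) T.1.2 &
      gcoef T.1.2 (iota 1 j.+1.*2) = (-1) ^+ k * 2%:R ^+ j.+1].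
Proof.
have [L1 L2 L3] := lead_ok k.
elim: j => [|j [IH1 IH2 IH3]].
  rewrite /= /lead; set T := evalA X (iter _ _ _) in L1 L2 L3 *.
  rewrite L1 gmul0l /gadd cat0s; split => //.
    apply: (wordsP_mul (P := all (fun i => i == 1%N)) (Q := all (fun i => (i < 3)%N))) => //.
      move=> u v hu hv; rewrite all_cat hv andbT.
      by apply/allP => i /(allP hu) /eqP ->.
  have eD : (1 * 1, [:: 1%N; 2%N]) :: gmul (gscal (-1)) (gmul (cg 2) (cg 1)) = Dg 1 2 by [].
  rewrite eD (gcoef_mulB _ L2); last by rewrite DgE.
  by rewrite L3 (Dg_coef (a := 1) (b := 2)) // expr1.
have ei : iota 1 j.+2 = iota 1 j.+1 ++ [:: (1 + j.+1)%N] by rewrite -(addn1 j.+1) iotaD.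
rewrite ei foldl_cat.
set F := foldl step (lead k) (iota 1 j.+1) in IH1 IH2 IH3 *.
have ea : (1 + j.+1).*2.-1 = j.+1.*2.+1 by rewrite add1n doubleS.
have eb : (1 + j.+1).*2 = j.+1.*2.+2 by rewrite add1n doubleS.
have -> : foldl step F [:: (1 + j.+1)%N] = Mul F (comm (Var K j.+1.*2.+1) (Var K j.+1.*2.+2)).
  by rewrite /= /step ea eb.
cbv zeta. rewrite evalA_Mul Amul11 Amul12 -/(Dg _ _).
set T := evalA X F in IH1 IH2 IH3 *.
rewrite IH1 gmul0l /gadd cat0s; split => //.
  apply: (wordsP_mul (P := all (fun i => (i < j.+1.*2.+1)%N))
           (Q := all (fun i => (i < j.+2.*2.+1)%N))).
  - move=> u v hu hv; rewrite all_cat hv andbT.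
    apply/allP => i /(allP hu) hi; apply: (ltn_trans hi).
    by rewrite ltnS doubleS leqW // leqW.
  - by [].
  - by rewrite DgE /wordsP /= !doubleS !ltnS leqnn leqW // leqnSn.
have ei2 : iota 1 j.+2.*2 = iota 1 j.+1.*2 ++ [:: j.+1.*2.+1; j.+1.*2.+2].
  by rewrite (doubleS j.+1) -addn2 iotaD add1n addn2.
rewrite ei2 (@gcoef_mulA _ _ _ _ _ _ IH2 (Dg_words (leqnn _) (leqnSn _))).
rewrite IH3 Dg_coef // exprS.
by rewrite -mulrA; congr (_ * _); rewrite mulrC -!exprS.
Qed.
Lemma evalA_subst env (sb : nat -> term K) t :
  evalA env (subst sb t) = evalA (fun i => evalA env (sb i)) t.
Proof. by elim: t => //= a -> b ->. Qed.

Lemma evalA_ext n e1 e2 (t : term K) :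
  (forall i, (1 <= i <= n)%N -> e1 i = e2 i) -> vars_in n t -> evalA e1 t = evalA e2 t.
Proof.
move=> h; elim: t => //=.
- by move=> a IHa b IHb /andP [/IHa -> /IHb ->].
- by move=> a IHa b IHb /andP [/IHa -> /IHb ->].
Qed.

Lemma vars_lead n k : (2 <= n)%N -> vars_in n (lead k).
Proof.
move=> hn; elim: k => [|k IH] /=; first by rewrite hn.
by rewrite IH /= (leq_trans _ hn).
Qed.

Lemma vars_fold n l (acc : term K) : vars_in n acc ->
  all (fun k => (1 <= k)%N && (k.*2 <= n)%N) l -> vars_in n (foldl step acc l).
Proof.
elim: l acc => [|a l IH] acc //= hacc /andP [/andP [h1 h2] hl].
apply: IH => //=; rewrite hacc h2 /=.
have h3 : (1 <= a.*2.-1)%N by case: a h1 {h2} => // a _; rewrite doubleS.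
rewrite h3 (leq_trans (leq_pred _) h2) andbT /=.
by rewrite (leq_trans h3 (leq_pred _)).
Qed.

Lemma Avalid_X i : Avalid (X i).
Proof.
rewrite /Avalid /X; case: ifP => _; last by case: ifP => _ S _; rewrite gcoef_nil.
move=> S hS; rewrite /gcoef big_cons big_nil /=.
by case: S hS.
Qed.
End Conc.

Theorem lemma3p6 (K : fieldType) (charK0 : [pchar K]%R =i pred0)
  (n m : nat) (hn2 : (2 <= n)%N) (hneven : ~~ odd n) (hm : (n + 2 <= m)%N) :
  ~ PI_Fn n (f2 K m n).
Proof.
move=> hPI.
pose sb := fun i => if (1 <= i <= n)%N then Var K i else Cst (0 : K).
have hsb : forall i, vars_in n (sb i).
  by move=> i; rewrite /sb; case: ifP.
have := hPI sb hsb (@X K) (@Avalid_X K).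
rewrite evalA_subst.
have hn : n = (n./2).*2 by rewrite -[LHS]odd_double_half (negbTE hneven).
have hj : (0 < n./2)%N by rewrite -double_gt0 -hn (leq_trans _ hn2).
have hf : f2 K m n = foldl (@step K) (@lead K (m - n - 1)) (iota 1 n./2) by [].
have hv : vars_in n (f2 K m n).
  rewrite hf; apply: vars_fold; first exact: vars_lead.
  apply/allP => k; rewrite mem_iota => /andP [h1 h2]; rewrite h1 /=.
  by rewrite [X in (_ <= X)%N]hn leq_double -ltnS -(add1n n./2).
rewrite (@evalA_ext K n _ (@X K) _ _ hv); last first.
  by move=> i hi; rewrite /sb hi.
rewrite hf.
case: n./2 hj hn => // j _ hn.
have [_ _ hc] := fold_ok K (m - n - 1) j.
case=> _ /(_ (iota 1 j.+1.*2)) h _.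
move: hc; rewrite h => /esym /eqP.
apply/negP; rewrite mulf_eq0 negb_or signr_eq0 /= expf_eq0 /=.
by rewrite (pcharf0P _).1.
Qed.
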